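(* Let $\succsim=(\succsim_i)_{i\in I}$ be a profile of marginal preferences and let $\mu\in\mathcal M$ be a matching. Then $\mu$ is unambiguously individually rational at $\succsim$ if and only if $\mu$ is component-wise individually rational at $\succsim$.
   Context: Setup. $I=\{1,\dots,n\}$ is a finite set of agents and $O$ a finite set of objects. Each agent $i$ is endowed with a nonempty set $\Omega_i\subseteq O$; the sets $\Omega_i$ are pairwise disjoint and $\bigcup_{i\in I}\Omega_i=O$. A matching is a map $\mu:I\to 2^O$ with $\mu(i)\cap\mu(j)=\emptyset$ for $i\neq j$ and $|\mu(i)|=|\Omega_i|$ for every $i$; $\mathcal M$ is the set of matchings, and $\Omega$ also denotes the endowment matching $i\mapsto\Omega_i$. Agent $i$'s consumption set is $\mathcal X_i=\{X\subseteq O:|X|=|\Omega_i|\}$; a preference of $i$ is a complete, transitive, reflexive relation $R_i$ on $\mathcal X_i$ with strict part $P_i$. A marginal preference of $i$ is a weak order $\succsim_i$ on $O$ (strict part $\succ_i$). $R_i$ is responsive to $\succsim_i$ if for all $o,p\in O$ and all $Q\in\mathcal X_i$ with $o\in Q$, $p\notin Q$: $Q\mathrel{R_i}(Q\setminus\{o\})\cup\{p\}$ iff $o\succsim_i p$. Given a profile $R$, $\mu$ is individually rational at $R$ if $\mu(i)\mathrel{R_i}\Omega_i$ for all $i$; $\mu'$ Pareto-improves $\mu$ if $\mu'(i)\mathrel{R_i}\mu(i)$ for all $i$ and $\mu'(i)\mathrel{P_i}\mu(i)$ for some $i$; $\mu$ is Pareto-efficient if no matching Pareto-improves it. Given a profile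 $\succsim$ of marginal preferences, $\mu$ is unambiguously individually rational if it is individually rational at every profile $R$ such that each $R_i$ is responsive to $\succsim_i$. The matching $\mu$ is component-wise individually rational at $\succsim$ if for every $i\in I$ and every $\omega\in\Omega_i$, $|\{o\in\mu(i):o\succsim_i\omega\}|\ \ge\ |\{o\in\Omega_i:o\succsim_i\omega\}|$. *)

(* Defs.v *)
From mathcomp Require Import all_boot.
Set Implicit Arguments. Unset Strict Implicit. Unset Printing Implicit Defensive.

Section Market.
Variables (I O : finType) (Omega : I -> {set O}).

Definition endowment : Prop :=
  (forall i, Omega i != set0) /\
  (forall i j, i != j -> [disjoint Omega i & Omega j]) /\
  (\bigcup_(i : I) Omega i = [set: O]).

Definition matching (mu : I -> {set O}) : Prop :=
  (forall i j, i != j -> [disjoint mu i & mu j]) /\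
  (forall i, #|mu i| = #|Omega i|).

Definition consumption (i : I) (X : {set O}) : Prop := #|X| = #|Omega i|.

Definition preference (i : I) (R : {set O} -> {set O} -> Prop) : Prop :=
  (forall X, consumption i X -> R X X) /\
  (forall X Y, consumption i X -> consumption i Y -> R X Y \/ R Y X) /\
  (forall X Y Z, consumption i X -> consumption i Y -> consumption i Z ->
     R X Y -> R Y Z -> R X Z).

Definition marginal_pref (m : rel O) : Prop :=
  (forall o, m o o) /\ (forall o p, m o p || m p o) /\
  (forall o p q, m o p -> m p q -> m o q).

Definition responsive (i : I) (R : {set O} -> {set O} -> Prop) (m : rel O) : Prop :=
  forall (o p : O) (Q : {set O}), consumption i Q -> o \in Q -> p \notin Q ->
    (R Q ((Q :\ o) :|: [set p]) <-> m o p).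

Definition indiv_rational (R : I -> {set O} -> {set O} -> Prop)
  (mu : I -> {set O}) : Prop :=
  forall i, R i (mu i) (Omega i).

Definition unamb_IR (m : I -> rel O) (mu : I -> {set O}) : Prop :=
  forall R : I -> {set O} -> {set O} -> Prop,
    (forall i, preference i (R i) /\ responsive i (R i) (m i)) ->
    indiv_rational R mu.

Definition componentwise_IR (m : I -> rel O) (mu : I -> {set O}) : Prop :=
  forall i, forall w, w \in Omega i ->
    #|[set o in mu i | m i o w]| >= #|[set o in Omega i | m i o w]|.

End Market.

(* Main.v *)
Require Import Defs.
From mathcomp Require Import all_boot zify.
Set Implicit Arguments. Unset Strict Implicit. Unset Printing Implicit Defensive.

Section Aux.
Variables (O : finType) (m : rel O).
Hypothesis hm : marginal_pref m.

Definition rank (o : O) := #|[set q | m o q]|.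

Lemma rank_le o p : m o p = (rank p <= rank o).
Proof.
case: hm => Hr [Hc Ht].
case Hop: (m o p).
  apply/esym/subset_leq_card/subsetP => q; rewrite !inE => Hpq.
  exact: Ht Hop Hpq.
apply/esym/negbTE; rewrite -ltnNge.
have Hpo : m p o by move: (Hc o p); rewrite Hop.
apply: proper_card; apply/properP; split.
  apply/subsetP => q; rewrite !inE => Hoq; exact: Ht Hpo Hoq.
by exists p; rewrite !inE ?Hop ?Hr.
Qed.

Definition cnt (X : {set O}) w := #|[set o in X | m o w]|.

Lemma cnt_sum X w : cnt X w = \sum_(o in X) (m o w : nat).
Proof.
rewrite /cnt -sum1_card big_mkcond [RHS]big_mkcond /=.
by apply: eq_bigr => o _; rewrite !inE; case: (o \in X); case: (m o w).
Qed.

Lemma sum_swap (F : O -> nat) (Q : {set O}) o p : o \in Q -> p \notin Q ->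
  \sum_(x in Q :\ o :|: [set p]) F x + F o = \sum_(x in Q) F x + F p.
Proof.
move=> Ho Hp.
rewrite setUC big_setU1 /=; last by rewrite !inE negb_and Hp orbT.
rewrite [in RHS](big_setD1 _ Ho) /=; lia.
Qed.

Lemma cnt_all (X Y : {set O}) : (forall w, w \in X -> cnt X w <= cnt Y w) ->
  forall w, cnt X w <= cnt Y w.
Proof.
case: hm => Hr [Hc Ht] H w.
case: (set_0Vmem [set o in X | m o w]) => [E|[o0 Ho0]].
  by rewrite /cnt E cards0.
case: (arg_minnP rank Ho0) => w' Hw' Hmin.
have : w' \in [set o in X | m o w] := Hw'.
rewrite inE => /andP[Hw'X Hw'w].
have E : [set o in X | m o w] = [set o in X | m o w'].
  apply/setP => o; rewrite !inE; case HoX: (o \in X) => //=.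
  apply/idP/idP => Hm.
    rewrite rank_le; have Hm' : forall j, j \in [set o in X | m o w] -> rank w' <= rank j := Hmin.
    by apply: Hm'; rewrite inE HoX.
  exact: Ht Hm Hw'w.
rewrite /cnt E; apply: leq_trans (H _ Hw'X) _.
apply/subset_leq_card/subsetP => o; rewrite !inE => /andP[-> Hm] /=.
exact: Ht Hm Hw'w.
Qed.
Lemma swap_main (R : {set O} -> {set O} -> Prop) (n : nat) :
  (forall X : {set O}, #|X| = n -> R X X) ->
  (forall X Y Z : {set O}, #|X| = n -> #|Y| = n -> #|Z| = n -> R X Y -> R Y Z -> R X Z) ->
  (forall o p (Q : {set O}), #|Q| = n -> o \in Q -> p \notin Q ->
      (R Q (Q :\ o :|: [set p]) <-> m o p)) ->
  forall k (X Y : {set O}), #|X :\: Y| = k -> #|X| = n -> #|Y| = n ->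
    (forall w, cnt X w <= cnt Y w) -> R Y X.
Proof.
case: hm => Hr [Hc Ht] Hrefl Htrans Hresp k.
elim: k => [|k IH] X Y Hk HX HY Hcw.
  have E : X = Y.
    apply/eqP; rewrite eqEcard HX HY leqnn andbT -setD_eq0.
    by rewrite -cards_eq0 Hk.
  by rewrite E; apply: Hrefl.
have [x0 Hx0] : exists x0, x0 \in X :\: Y.
  by apply/set0Pn; rewrite -cards_eq0 Hk.
case: (arg_maxnP rank Hx0) => x Hx' Hmax'.
have Hx : x \in X :\: Y := Hx'.
have Hmax : forall z, z \in X :\: Y -> rank z <= rank x := Hmax'.
clear Hx' Hmax'.
move: (Hx); rewrite inE => /andP[HxY HxX].
have [y /andP[Hy Hyx]] : exists y, (y \in Y :\: X) && m y x.
  case: (pickP [pred y | (y \in Y :\: X) && m y x]) => [y Hy|Hnone].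
    by exists y.
  have := Hcw x; rewrite /cnt.
  have Hsub : [set o in Y | m o x] \subset [set o in X | m o x] :\ x.
    apply/subsetP => o; rewrite !inE => /andP[HoY Hox].
    have := Hnone o; rewrite /= !inE HoY Hox !andbT /= => /negbFE HoX.
    rewrite HoX andbT; apply/eqP => Eo; move: HoY; rewrite Eo.
    by rewrite (negbTE HxY).
  move: (subset_leq_card Hsub).
  rewrite [#|[set o in X | m o x]|](cardsD1 x) !inE HxX Hr /=; lia.
move: (Hy); rewrite inE => /andP[HyX HyY].
set X' := X :\ x :|: [set y].
have HX' : #|X'| = n.
  rewrite /X' setUC cardsU1 !inE negb_and HyX orbT /=.
  move: HX; rewrite (cardsD1 x) HxX /=; lia.
have HkX' : #|X' :\: Y| = k.
  have -> : X' :\: Y = (X :\: Y) :\ x.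
    apply/setP => z; rewrite /X' !inE.
    case: (z =P y) => [->|_]; first by rewrite HyY /= andbF.
    by rewrite orbF; case: (z \in Y); case: (z == x); case: (z \in X).
  by move: Hk; rewrite (cardsD1 x) Hx /= => -[].
have RX'X : R X' X.
  have HyX' : y \in X' by rewrite /X' !inE eqxx orbT.
  have HxX' : x \notin X' by rewrite /X' !inE eqxx /=; apply/eqP => E; move: HyX; rewrite -E HxX.
  have := (Hresp y x X' HX' HyX' HxX').2 Hyx.
  have -> // : X' :\ y :|: [set x] = X.
  apply/setP => z; rewrite /X' !inE.
  case: (z =P x) => [->|Hzx] /=; first by rewrite orbT.
  case: (z =P y) => [->|Hzy] /=; first by rewrite (negbTE HyX).
  by rewrite !orbF.
have Hcw' : forall w, cnt X' w <= cnt Y w.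
  move=> w.
  have Hs := sum_swap (fun o => (m o w : nat)) HxX HyX.
  rewrite -!cnt_sum -/X' in Hs.
  have := Hcw w.
  case Hyw: (m y w); case Hxw: (m x w); rewrite /= in Hs; try lia.
  move=> _.
  have Hsub : [set o in X | m o w] \subset [set o in Y | m o w] :\ y.
    apply/subsetP => o; rewrite !inE => /andP[HoX How].
    rewrite How andbT.
    case HoY: (o \in Y); last first.
      have : o \in X :\: Y by rewrite inE HoY HoX.
      move=> /Hmax; rewrite -rank_le => Hxo.
      by rewrite (Ht _ _ _ Hxo How) in Hxw.
    rewrite andbT; apply/eqP => E; move: HoX; rewrite E.
    by rewrite (negbTE HyX).
  move: (subset_leq_card Hsub).
  rewrite /cnt in Hs *.
  rewrite (cardsD1 y [set o in Y | m o w]) !inE HyY Hyw /=; lia.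
apply: (Htrans Y X' X) => //.
exact: (IH X' Y).
Qed.
End Aux.

Lemma u_le (O : finType) (m : rel O) (hm : marginal_pref m) w K o p :
  (rank m p + m p w * K <= rank m o + m o w * K) = m o p.
Proof.
have Hrl := rank_le hm.
case: (hm) => Hr [Hc Ht].
case Hop: (m o p).
  have := Hrl o p; rewrite Hop => /esym Hle.
  case Hpw: (m p w); last by rewrite /=; lia.
  by rewrite (Ht _ _ _ Hop Hpw) /=; lia.
have := Hrl o p; rewrite Hop => /esym/negbT; rewrite -ltnNge => Hlt.
have Hpo : m p o by move: (Hc o p); rewrite Hop.
case How: (m o w); last by rewrite /=; lia.
by rewrite (Ht _ _ _ Hpo How) /=; apply/negbTE; rewrite -ltnNge; lia.
Qed.

Theorem proposition1 (I O : finType) (Omega : I -> {set O})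
  (m : I -> rel O) (mu : I -> {set O}) :
  endowment Omega ->
  (forall i, marginal_pref (m i)) ->
  matching Omega mu ->
  (unamb_IR Omega m mu <-> componentwise_IR Omega m mu).
Proof.
move=> _ Hmar [_ Hcard]; split.
- move=> Hu i w Hw; rewrite leqNgt; apply/negP => Hlt.
  pose K := #|O| * #|O| + 1.
  pose u j o := rank (m j) o + (m j o w) * (if j == i then K else 0).
  pose R j (X Y : {set O}) := \sum_(o in Y) u j o <= \sum_(o in X) u j o.
  have HR : forall j, preference Omega j (R j) /\ responsive Omega j (R j) (m j).
    move=> j; split; first split.
    + by move=> X _; rewrite /R leqnn.
    + split.
        by move=> X Y _ _; rewrite /R; case/orP: (leq_total (\sum_(o in Y) u j o) (\sum_(o in X) u j o)); [left|right].
      by move=> X Y Z _ _ _; rewrite /R; lia.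
    move=> o p Q _ HoQ HpQ.
    have Hs := sum_swap (u j) HoQ HpQ.
    rewrite /R -(u_le (Hmar j) w (if j == i then K else 0)) -/(u j p) -/(u j o).
    split => H; lia.
  have := Hu R HR i; rewrite /R.
  have Hsum : forall X : {set O}, \sum_(o in X) u i o = \sum_(o in X) rank (m i) o + cnt (m i) X w * K.
    move=> X; rewrite /u eqxx big_split /= cnt_sum big_distrl /=; done.
  have Hbd : forall X : {set O}, \sum_(o in X) rank (m i) o <= #|O| * #|O|.
    move=> X; have H1 : \sum_(o in X) rank (m i) o <= \sum_(o in X) #|O|.
      by apply: leq_sum => o _; apply: max_card.
    apply: leq_trans H1 _.
    by rewrite sum_nat_const leq_mul2r max_card orbT.
  rewrite !Hsum.
  move: (Hbd (mu i)) (Hbd (Omega i)) Hlt; rewrite /cnt /K; nia.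
- move=> Hc R HR i.
  have Hi := HR i; case: Hi => [[Hrefl [Hcomp Htrans]] Hresp].
  apply: (swap_main (Hmar i) (n := #|Omega i|)).
  + by move=> X HX; apply: Hrefl.
  + by move=> X Y Z HX HY HZ; apply: Htrans.
  + by move=> o p Q HQ; apply: Hresp.
  + reflexivity.
  + by [].
  + by rewrite Hcard.
  + apply: (cnt_all (Hmar i)) => x Hx; exact: Hc.
Qed.
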